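(* Consider LocalOMD with positive sampling policy $\mu^s$. Let $C_\Psi=\sup_{x\in\mathcal X,\,p\in\Delta_{\mathcal A(x)}}D_x(p,\mu^1(\cdot|x))$ and let $\lambda_1\ge0$ be such that $\frac1{\eta^{t+1}(x)}-\frac1{\eta^t(x)}\le\lambda_1$ for all $x\in\mathcal X$ and $t\in[T]$. Then for all $t\in[T]$ and $h\in[H]$, \[\tilde\ell^t_h(a^t_h)\le(1+\lambda_1C_\Psi)\,\kappa(\mu^s|x^t_h).\]
   Context: Game structure. Fix an integer $H\ge1$. The min-player's information sets form a finite set $\mathcal X$; each $x$ has a depth $h(x)\in\{1,\dots,H\}$ and a finite nonempty action set $\mathcal A(x)$. Perfect recall: every $x$ of depth $h$ has a unique history $(x_1,a_1,\dots,x_{h-1},a_{h-1},x_h=x)$ with $x_i$ of depth $i$, $a_i\in\mathcal A(x_i)$; $x'$ directly follows $(x,a)$ if $h(x')=h(x)+1$ and the history of $x'$ contains $x$ followed by $a$; $x$ is in the history of $x'$ if $x=x'_i$ for some $i$ (including $x=x'$). A policy is $\mu=(\mu(\cdot|x))_x$ with $\mu(\cdot|x)\in\Delta_{\mathcal A(x)}$; $\Pi_{\min}$ the set of policies; positive if all $\mu(a|x)>0$. For $x$ of depth $h$ and $(x',a')$ with $x$ in the history of $x'$, $x'$ of depth $h'$ with history $(x'_1,a'_1,\dots,x'_{h'})$, $a'_{h'}=a'$: $\mu_{h:}(x',a')=\prod_{i=h}^{h'}\mu(a'_i|x'_i)$. $\kappa(\mu^s|x)=\max_{\mu\in\Pi_{\min}}\sum_{x':\,x\text{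 in history of }x'}\sum_{a'\in\mathcal A(x')}\mu_{h:}(x',a')/\mu^s_{h:}(x',a')$. Trajectories: at each round $t$ the min-player observes $(x^t_h,a^t_h,\ell^t_h)_{h=1}^H$ with $x^t_h$ of depth $h$, $a^t_h\in\mathcal A(x^t_h)$, $x^t_{h+1}$ directly following $(x^t_h,a^t_h)$, and $\ell^t_h\in[0,1]$. LocalOMD. For each $x$, $\Psi_x$ is a Legendre function on a closed convex set $\overline{\Omega_x}\subset\mathbb R^{|\mathcal A(x)|}_{\ge0}$ containing $\Delta_{\mathcal A(x)}$ (interior $\Omega_x$), with Bregman divergence $D_x(p,q)=\Psi_x(p)-\Psi_x(q)-\langle\nabla\Psi_x(q),p-q\rangle$. Learning rates $\eta^t(x)>0$ ($t=1,\dots,T+1$), non-increasing in $t$, with $\eta^{t+1}(x)=\eta^t(x)$ whenever $x\ne x^t_{h(x)}$. Given $\mu^1$ with $\mu^1(\cdot|x)\in\Omega_x$, at round $t$: $q^t_{H+1}=0$; for $h=H,\dots,1$, with $x=x^t_h$, $\tilde\ell^t_h\in\mathbb R^{\mathcal A(x)}$, $\tilde\ell^t_h(a)=\mathbf 1\{a=a^t_h\}(\ell^t_h+q^t_{h+1})/\mu^s(a^t_h|x)$, $h^t_x(p)=\langle\tilde\ell^t_h,p\rangle+\frac1{\eta^t(x)}D_x(p,\mu^t(\cdot|x))+\big(\frac1{\eta^{t+1}(x)}-\frac1{\eta^t(x)}\big)D_x(p,\mu^1(\cdot|x))$ on $\Delta_{\mathcal A(x)}$, $\mu^{t+1}(\cdot|x)=\arg\min_{\Delta_{\mathcal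 A(x)}}h^t_x$ (assumed to exist uniquely in $\Omega_x$), $q^t_h=\min_{\Delta_{\mathcal A(x)}}h^t_x$; for $x$ not on the trajectory, $\mu^{t+1}(\cdot|x)=\mu^t(\cdot|x)$. *)

(* Defs.v *)
From HB Require Import structures.
From mathcomp Require Import all_boot all_order all_algebra.
From mathcomp Require Import boolp classical_sets reals.
Unset Printing Implicit Defensive.
Import Order.TTheory GRing.Theory Num.Theory.
Local Open Scope ring_scope.
Local Open Scope classical_set_scope.

Section Vectors.
Variables (R : realType) (T : finType).
Implicit Types (p q v : T -> R) (S : set (T -> R)).

Definition vnorm v : R := \big[Num.max/0]_(a : T) `|v a|.
Definition vsub p q : T -> R := fun a => p a - q a.
Definition dotv p q : R := \sum_(a : T) p a * q a.
Definition in_simplex p : Prop := (forall a, 0 <= p a) /\ \sum_(a : T) p a = 1.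

Definition interior S : set (T -> R) :=
  [set q | exists2 d : R, 0 < d & forall p, vnorm (vsub p q) < d -> S p].
Definition closed_set S : Prop :=
  forall q, (forall e : R, 0 < e -> exists p, S p /\ vnorm (vsub p q) < e) -> S q.
Definition convex_set S : Prop :=
  forall p q (l : R), S p -> S q -> 0 <= l <= 1 ->
    S (fun a => l * p a + (1 - l) * q a).

Definition admissible_domain S : Prop :=
  [/\ closed_set S, convex_set S, (forall p, S p -> forall a, 0 <= p a)
    & (forall p, in_simplex p -> S p)].

Definition is_gradient (Psi : (T -> R) -> R) (g q : T -> R) : Prop :=
  forall e : R, 0 < e -> exists2 d : R, 0 < d & forall v, vnorm v < d ->
    `|Psi (fun a => q a + v a) - Psi q - dotv g v| <= e * vnorm v.

Definition legendre S (Psi : (T -> R) -> R) (gPsi : (T -> R) -> (T -> R)) : Prop :=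
  [/\ (forall p q (l : R), S p -> S q -> 0 <= l <= 1 ->
         Psi (fun a => l * p a + (1 - l) * q a) <= l * Psi p + (1 - l) * Psi q),
      (forall p q (l : R), interior S p -> interior S q -> p <> q -> 0 < l < 1 ->
         Psi (fun a => l * p a + (1 - l) * q a) < l * Psi p + (1 - l) * Psi q),
      (forall q, interior S q -> is_gradient Psi (gPsi q) q),
      (forall q, interior S q -> forall e : R, 0 < e -> exists2 d : R, 0 < d &
         forall p, interior S p -> vnorm (vsub p q) < d ->
           vnorm (vsub (gPsi p) (gPsi q)) < e)
    & (forall (qs : nat -> T -> R) b, (forall n, interior S (qs n)) -> S b ->
         ~ interior S b ->
         (forall e : R, 0 < e -> exists N, forall n, (N <= n)%N -> vnorm (vsub (qs n) b) < e) ->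
         forall M : R, exists N, forall n, (N <= n)%N -> M < vnorm (gPsi (qs n)))].

Definition breg (Psi : (T -> R) -> R) (gPsi : (T -> R) -> (T -> R)) p q : R :=
  Psi p - Psi q - dotv (gPsi q) (vsub p q).

End Vectors.

Arguments vnorm {R T}. Arguments vsub {R T}. Arguments dotv {R T}.
Arguments in_simplex {R T}. Arguments interior {R T}. Arguments closed_set {R T}.
Arguments convex_set {R T}. Arguments admissible_domain {R T}.
Arguments is_gradient {R T}. Arguments legendre {R T}. Arguments breg {R T}.

Section Game.
Variables (R : realType) (X : finType) (A : X -> finType)
  (dep : X -> nat) (par : X -> option {x : X & A x}).

(* Game structure with perfect recall: par x = Some (y, a) means x directly
   follows (y, a); depth-1 information sets have no parent. *)
Definition game_structure (H : nat) : Prop :=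
  [/\ (forall x, (1 <= dep x <= H)%N),
      (forall x, (0 < #|{: A x}|)%N)
    & (forall x, match par x with
                 | None => dep x = 1%N
                 | Some (existT y _) => dep x = (dep y).+1 end)].

Definition up (x : X) : X :=
  match par x with Some (existT y _) => y | None => x end.

Definition in_hist (x x' : X) : bool :=
  (dep x <= dep x')%N && (iter (dep x' - dep x) up x' == x).

Definition policy (mu : forall x, A x -> R) : Prop := forall x, in_simplex (mu x).

(* product of mu along the last n.+1 steps of the history of (x', a') *)
Fixpoint pprod (mu : forall x, A x -> R) (n : nat) (x' : X) (a' : A x') : R :=
  mu x' a' * match n with
             | 0%N => 1
             | n'.+1 => match par x' with
                        | Some (existT y b) => pprod mu n' y b
                        | None => 1 end end.

Definition reach (mu : forall x, A x -> R) (x x' : X) (a' : A x') : R :=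
  pprod mu (dep x' - dep x) x' a'.

(* kappa(mus | x) = max over policies (written as sup; the max is attained) *)
Definition kappa (mus : forall x, A x -> R) (x : X) : R :=
  sup [set v : R | exists mu, policy mu /\
         v = \sum_(x' : X | in_hist x x') \sum_(a' : A x') reach mu x x' a' / reach mus x x' a'].

Definition trajectories (H T : nat) (xs : nat -> nat -> X)
  (acts : forall t h, A (xs t h)) (loss : nat -> nat -> R) : Prop :=
  forall t, (1 <= t <= T)%N ->
    (forall h, (1 <= h <= H)%N -> dep (xs t h) = h /\ 0 <= loss t h <= 1) /\
    (forall h, (1 <= h < H)%N -> par (xs t h.+1) = Some (existT _ (xs t h) (acts t h))).

Definition learning_rates (T : nat) (xs : nat -> nat -> X) (eta : nat -> X -> R) : Prop :=
  forall x,
    (forall t, (1 <= t <= T.+1)%N -> 0 < eta t x) /\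
    (forall t, (1 <= t <= T)%N -> eta t.+1 x <= eta t x) /\
    (forall t, (1 <= t <= T)%N -> x <> xs t (dep x) -> eta t.+1 x = eta t x).

Section Run.
Variables (H T : nat) (Omega : forall x, set (A x -> R))
  (Psi : forall x, (A x -> R) -> R) (gPsi : forall x, (A x -> R) -> (A x -> R))
  (mus : forall x, A x -> R) (eta : nat -> X -> R)
  (xs : nat -> nat -> X) (acts : forall t h, A (xs t h)) (loss : nat -> nat -> R)
  (mu : nat -> forall x, A x -> R) (q : nat -> nat -> R).

Definition ltilde (t h : nat) : A (xs t h) -> R :=
  fun a => if a == acts t h then (loss t h + q t h.+1) / mus (xs t h) a else 0.

Definition hobj (t : nat) (x : X) (l : A x -> R) (p : A x -> R) : R :=
  dotv l p + (eta t x)^-1 * breg (Psi x) (gPsi x) p (mu t x)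
  + ((eta t.+1 x)^-1 - (eta t x)^-1) * breg (Psi x) (gPsi x) p (mu 1%N x).

Definition localOMD_run : Prop :=
  (forall x, in_simplex (mu 1%N x) /\ interior (Omega x) (mu 1%N x)) /\
  forall t, (1 <= t <= T)%N ->
    [/\ q t H.+1 = 0,
        (forall h, (1 <= h <= H)%N ->
           let x := xs t h in
           [/\ in_simplex (mu t.+1 x), interior (Omega x) (mu t.+1 x),
               (forall p, in_simplex p -> hobj t x (ltilde t h) (mu t.+1 x) <= hobj t x (ltilde t h) p),
               (forall p, in_simplex p -> hobj t x (ltilde t h) p <= hobj t x (ltilde t h) (mu t.+1 x) ->
                  p = mu t.+1 x)
             & q t h = hobj t x (ltilde t h) (mu t.+1 x)])
      & (forall x, x <> xs t (dep x) -> mu t.+1 x = mu t x)].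

End Run.
End Game.

Arguments game_structure {X A}. Arguments up {X A}. Arguments in_hist {X A}.
Arguments policy {R X A}. Arguments pprod {R X A}. Arguments reach {R X A}.
Arguments kappa {R X A}. Arguments trajectories {R X A}. Arguments learning_rates {R X}.
Arguments ltilde {R X A}. Arguments hobj {R X A}. Arguments localOMD_run {R X A}.

(* Main.v *)
Require Import Defs.
From HB Require Import structures.
From mathcomp Require Import all_boot all_order all_algebra.
From mathcomp Require Import boolp classical_sets reals.
From mathcomp Require Import zify ring lra.
Import Order.TTheory GRing.Theory Num.Theory.
Local Open Scope ring_scope.

Section Helpers.
Variables (R : realType) (X : finType) (A : X -> finType)
  (par : X -> option {x : X & A x}).

Lemma pprod_ge0 (m : forall x, A x -> R) : (forall x a, 0 <= m x a) ->
  forall n x a, 0 <= pprod par m n x a.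
Proof.
move=> hm; elim=> [|n IH] x a /=; first by rewrite mulr1.
by apply: mulr_ge0 => //; case: (par x) => [[y b]|].
Qed.

Lemma pprod_le1 (m : forall x, A x -> R) : (forall x a, 0 <= m x a <= 1) ->
  forall n x a, pprod par m n x a <= 1.
Proof.
move=> hm; elim=> [|n IH] x a /=; first by rewrite mulr1; case/andP: (hm x a).
case/andP: (hm x a) => h0 h1; apply: mulr_ile1 => //.
  by case: (par x) => [[y b]|] //; apply: pprod_ge0 => z c; case/andP: (hm z c).
by case: (par x) => [[y b]|].
Qed.

Lemma simplex_le1 (T : finType) (p : T -> R) a : in_simplex p -> 0 <= p a <= 1.
Proof.
case=> h0 hs; rewrite h0 /= -hs (bigD1 a) //= lerDl.
by apply: sumr_ge0 => b _.
Qed.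

Lemma breg_self (T : finType) (Ps : (T -> R) -> R) (g : (T -> R) -> (T -> R)) p :
  breg Ps g p p = 0.
Proof.
rewrite /breg /dotv /vsub big1 ?subrr ?subr0 // => a _.
by rewrite subrr mulr0.
Qed.

End Helpers.

Theorem mainTheorem4 (R : realType) (X : finType) (A : X -> finType)
  (dep : X -> nat) (par : X -> option {x : X & A x}) (H T : nat)
  (Omega : forall x, set (A x -> R))
  (Psi : forall x, (A x -> R) -> R) (gPsi : forall x, (A x -> R) -> (A x -> R))
  (mus : forall x, A x -> R) (eta : nat -> X -> R)
  (xs : nat -> nat -> X) (acts : forall t h, A (xs t h)) (loss : nat -> nat -> R)
  (mu : nat -> forall x, A x -> R) (q : nat -> nat -> R)
  (CPsi lambda1 : R) :
  (1 <= H)%N ->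
  game_structure dep par H ->
  (forall x, admissible_domain (Omega x) /\ legendre (Omega x) (Psi x) (gPsi x)) ->
  policy mus -> (forall x a, 0 < mus x a) ->
  trajectories dep par H T xs acts loss ->
  learning_rates dep T xs eta ->
  localOMD_run dep H T Omega Psi gPsi mus eta xs acts loss mu q ->
  (forall x p, in_simplex p -> breg (Psi x) (gPsi x) p (mu 1%N x) <= CPsi) ->
  0 <= lambda1 ->
  (forall x t, (1 <= t <= T)%N -> (eta t.+1 x)^-1 - (eta t x)^-1 <= lambda1) ->
  forall t h, (1 <= t <= T)%N -> (1 <= h <= H)%N ->
    ltilde mus xs acts loss q t h (acts t h)
      <= (1 + lambda1 * CPsi) * kappa dep par mus (xs t h).
Proof.
move=> H1 [Hdep Hcard Hpar] _ Hmus Hmusp Htraj Heta [Hmu1 Hrun] HC Hl0 Hlam t h Ht Hh.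
have Hpol : forall s, (1 <= s <= T.+1)%N -> forall x, in_simplex (mu s x).
  elim=> [//|s IH] Hs x.
  case: (posnP s) => [->|s0]; first by case: (Hmu1 x).
  have Hs' : (1 <= s <= T)%N by lia.
  case: (Hrun s Hs') => _ Hr Hoff.
  case: (eqVneq x (xs s (dep x))) => [E|ne].
    by have [Hsimp _ _ _ _] := Hr (dep x) (Hdep x); rewrite E.
  rewrite Hoff; last exact/eqP.
  apply: IH; lia.
have C0 : 0 <= CPsi.
  have := HC (xs t h) (mu 1%N (xs t h)) (Hpol 1%N (ltac:(lia)) _).
  by rewrite breg_self.
have [Htr Hpart] := Htraj t Ht.
set S := fun j => loss t j + q t j.+1.
set r := fun j => mu t (xs t j) (acts t j) / mus (xs t j) (acts t j).
set P := fun i k => \prod_(i.+1 <= j < k.+1) r j.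
have r0 : forall j, 0 <= r j.
  move=> j; apply: divr_ge0; first by case: (Hpol t (ltac:(lia)) (xs t j)).
  exact: ltW.
have Hq : forall j, (1 <= j <= H)%N -> q t j <= r j * S j + lambda1 * CPsi.
  move=> j Hj; case: (Hrun t Ht) => _ Hr _.
  have [_ _ Hmin _ ->] := Hr j Hj.
  apply: le_trans (Hmin _ (Hpol t (ltac:(lia)) (xs t j))) _.
  rewrite /hobj breg_self mulr0 addr0.
  have -> : dotv (ltilde mus xs acts loss q t j) (mu t (xs t j)) = r j * S j.
    rewrite /dotv (bigD1 (acts t j)) //= big1 => [|b /negbTE nb].
      by rewrite /ltilde eqxx addr0 /r /S; ring.
    by rewrite /ltilde nb mul0r.
  rewrite lerD2l.
  have [Hpos [Hdec _]] := Heta (xs t j).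
  have D0 : 0 <= (eta t.+1 (xs t j))^-1 - (eta t (xs t j))^-1.
    rewrite subr_ge0 lef_pV2 ?posrE; [exact: Hdec| apply: Hpos; lia| apply: Hpos; lia].
  apply: le_trans (_ : _ <= ((eta t.+1 (xs t j))^-1 - (eta t (xs t j))^-1) * CPsi) _.
    by apply: ler_wpM2l => //; apply: HC; apply: Hpol; lia.
  by apply: ler_wpM2r => //; apply: Hlam.
have LC0 : 0 <= lambda1 * CPsi by apply: mulr_ge0.
have Hind : forall d j, (1 <= j)%N -> (j + d = H)%N ->
    S j <= (1 + lambda1 * CPsi) * \sum_(j <= k < H.+1) P j k.
  elim=> [|d IH] j j1 hjd.
    have -> : j = H by rewrite -hjd addn0.
    rewrite big_nat1 /P big_geq // mulr1 /S.
    case: (Hrun t Ht) => -> _ _; rewrite addr0.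
    have [_ /andP[_ l1]] := Htr H (ltac:(lia)).
    lra.
  have IH1 := IH j.+1 (ltac:(lia)) (ltac:(lia)).
  have Hq1 := Hq j.+1 (ltac:(lia)).
  have [_ /andP[_ l1]] := Htr j (ltac:(lia)).
  rewrite big_ltn; last lia.
  have -> : \sum_(j.+1 <= k < H.+1) P j k = r j.+1 * \sum_(j.+1 <= k < H.+1) P j.+1 k.
    rewrite big_distrr /=; apply: eq_big_nat => k Hk.
    by rewrite /P big_ltn //; case/andP: Hk.
  rewrite /P big_geq // -/P.
  set Sg := \sum_(j.+1 <= k < H.+1) P j.+1 k in IH1 *.
  have := ler_wpM2l (r0 j.+1) IH1.
  rewrite /S /= in Hq1 *.
  move=> h2.
  have -> : (1 + lambda1 * CPsi) * (1 + r j.+1 * Sg) =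
    1 + (r j.+1 * ((1 + lambda1 * CPsi) * Sg) + lambda1 * CPsi) by ring.
  apply: lerD => //; apply: le_trans Hq1 _; apply: lerD => //.
have Hmain := Hind (H - h)%N h (ltac:(lia)) (ltac:(lia)).
have mh0 := Hmusp (xs t h) (acts t h).
have -> : ltilde mus xs acts loss q t h (acts t h) = S h / mus (xs t h) (acts t h).
  by rewrite /ltilde eqxx.
apply: le_trans (_ : _ <= (1 + lambda1 * CPsi) * (\sum_(h <= k < H.+1) P h k) / mus (xs t h) (acts t h)) _.
  by apply: ler_wpM2r => //; rewrite invr_ge0 ltW.
rewrite -mulrA; apply: ler_wpM2l; first lra.
have Hiter : forall n i, (1 <= i)%N -> (i + n <= H)%N -> iter n (up par) (xs t (i + n)%N) = xs t i.
  elim=> [|n IH] i i1 hin; first by rewrite addn0.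
  rewrite iterSr addnS.
  have -> : up par (xs t (i + n)%N.+1) = xs t (i + n)%N.
    by rewrite /up (Hpart (i + n)%N (ltac:(lia))).
  apply: IH => //; lia.
have Hhist : forall k, (h <= k <= H)%N -> in_hist dep par (xs t h) (xs t k).
  move=> k Hk; rewrite /in_hist (Htr k (ltac:(lia))).1 (Htr h (ltac:(lia))).1.
  apply/andP; split; first lia.
  have := Hiter (k - h)%N h (ltac:(lia)) (ltac:(lia)).
  rewrite subnKC; last lia.
  by move=> ->.
have Hpp : forall (m : forall x, A x -> R) n i, (1 <= i)%N -> (i + n <= H)%N ->
    pprod par m n (xs t (i + n)%N) (acts t (i + n)%N) = \prod_(i <= j < (i + n)%N.+1) m (xs t j) (acts t j).
  move=> m; elim=> [|n IH] i i1 hin.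
    by rewrite addn0 /= mulr1 big_nat1.
  have hp : (1 <= (i + n)%N < H)%N by lia.
  rewrite addnS /= (Hpart _ hp) /= IH //; last lia.
  by rewrite [in RHS]big_nat_recr /=; [rewrite mulrC | lia].
have Hreach : forall (m : forall x, A x -> R) k, (h <= k <= H)%N ->
    reach dep par m (xs t h) (xs t k) (acts t k) = \prod_(h <= j < k.+1) m (xs t j) (acts t j).
  move=> m k Hk; rewrite /reach (Htr k (ltac:(lia))).1 (Htr h (ltac:(lia))).1.
  have := Hpp m (k - h)%N h (ltac:(lia)) (ltac:(lia)).
  rewrite subnKC //; lia.
set x0 := xs t h.
pose mu' : forall x, A x -> R := fun x b =>
  if Tagged A b == Tagged A (acts t h) then 1 else if x == x0 then 0 else mu t x b.
have Hpol' : policy mu'.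
  move=> x; case: (eqVneq x x0) => [E|ne].
    rewrite /mu' E; split.
      by move=> b; case: ifP => //; rewrite eqxx.
    rewrite (bigD1 (acts t h)) //= !eqxx big1 ?addr0 // => b nb.
    by rewrite eq_Tagged /= (negbTE nb).
  have Ht' : forall b : A x, (Tagged A b == Tagged A (acts t h)) = false.
    move=> b; apply/negbTE; apply: contra ne => /eq_tag /= ->; exact: eqxx.
  rewrite /mu'; under eq_fun do rewrite Ht' (negbTE ne).
  apply: Hpol; lia.
have mu'0 : forall x a, 0 <= mu' x a <= 1 by move=> x a; apply: simplex_le1.
have mus01 : forall x a, 0 <= mus x a by move=> x a; exact: ltW.
have Hub : has_ubound [set v : R | exists mu0, policy mu0 /\
         v = \sum_(x' : X | in_hist dep par x0 x') \sum_(a' : A x') reach dep par mu0 x0 x' a' / reach dep par mus x0 x' a'].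
  exists (\sum_(x' | in_hist dep par x0 x') \sum_(a' : A x') (reach dep par mus x0 x' a')^-1).
  move=> v [m [Hm ->]]; apply: ler_sum => x' _; apply: ler_sum => a' _.
  rewrite -[X in _ <= X]mul1r; apply: ler_wpM2r; first by rewrite invr_ge0 /reach pprod_ge0.
  rewrite /reach; apply: pprod_le1 => y b; exact: simplex_le1.
set g := fun x' => \sum_(a' : A x') reach dep par mu' x0 x' a' / reach dep par mus x0 x' a'.
have g0 : forall x', 0 <= g x'.
  move=> x'; apply: sumr_ge0 => a' _; apply: divr_ge0; rewrite /reach pprod_ge0 //.
  by move=> y b; case/andP: (mu'0 y b).
apply: le_trans (_ : _ <= \sum_(x' | in_hist dep par x0 x') g x') _; last first.
  apply: (ub_le_sup Hub); by exists mu'.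
have Hne : forall j, (h < j <= H)%N -> xs t j != x0.
  move=> j Hj; apply/negP => /eqP E.
  have := (Htr j (ltac:(lia))).1; rewrite E /x0 (Htr h (ltac:(lia))).1; lia.
have Hmj : forall j, (h < j <= H)%N -> mu' (xs t j) (acts t j) = mu t (xs t j) (acts t j).
  move=> j Hj; rewrite /mu' (negbTE (Hne j Hj)).
  have -> : (Tagged A (acts t j) == Tagged A (acts t h)) = false; last by [].
  apply/negbTE; apply: contra (Hne j Hj) => /eq_tag /= ->; exact: eqxx.
apply: le_trans (_ : _ <= \sum_(h <= k < H.+1) g (xs t k)) _.
  rewrite big_distrl /=; apply: ler_sum_nat => k Hk.
  rewrite /g (bigD1 (acts t k)) //= -[X in X <= _]addr0; apply: lerD; last first.
    apply: sumr_ge0 => a' _; apply: divr_ge0; rewrite /reach pprod_ge0 //.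
    by move=> y b; case/andP: (mu'0 y b).
  rewrite (Hreach mu' k) ?(Hreach mus k); try lia.
  rewrite big_ltn; last lia.
  rewrite (big_ltn (m:=h) (n:=k.+1)); last lia.
  rewrite le_eqVlt; apply/orP; left; apply/eqP.
  rewrite /mu' eqxx mul1r -/mu'.
  rewrite (eq_big_nat _ _ (F1 := fun j => mu' (xs t j) (acts t j)) (F2 := fun j => mu t (xs t j) (acts t j))); last first.
    move=> j Hj; apply: Hmj; lia.
  rewrite /P /r prodf_div invfM; ring.
rewrite -(big_map (xs t) xpredT g) big_uniq; last first.
  rewrite map_inj_in_uniq ?iota_uniq // => k1 k2.
  rewrite !mem_index_iota => Hk1 Hk2 E.
  have := (Htr k1 (ltac:(lia))).1; rewrite E (Htr k2 (ltac:(lia))).1 => ->.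
  by [].
rewrite [X in _ <= X](bigID (fun x' => x' \in map (xs t) (index_iota h H.+1))) /=.
rewrite -[X in X <= _]addr0; apply: lerD; last by apply: sumr_ge0.
rewrite le_eqVlt; apply/orP; left; apply/eqP; apply: eq_bigl => x'.
case E: (x' \in _); rewrite ?andbF ?andbT //.
move/mapP: E => [k]; rewrite mem_index_iota => Hk ->.
by rewrite Hhist //; lia.
Qed.
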